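(* For any American option $\xi$, \[ \{x\in\mathbb{R}^d : \exists Y\in\Phi^{\mathrm{ag}}(\xi),\ x=Y_0\}=\{x\in\mathbb{R}^d:\exists y\in\Phi^{\mathrm{ad}}(\xi),\ x=y_0\}. \]
   Context: Finite filtered probability space $(\Omega,\mathcal{F},\mathbb{P};(\mathcal{F}_t)_{t=0}^T)$ with $\mathcal{F}_0$ trivial, $\mathcal{F}_T=2^\Omega$, $\mathbb{P}(\{\omega\})>0$. $\mathcal{L}_t$: $\mathcal{F}_t$-measurable $\mathbb{R}^d$-valued random variables. $d$ assets with $\mathcal{F}_t$-measurable exchange rates $\pi^{jk}_t>0$, $\pi^{jj}_t=1$. Solvency cone $\mathcal{K}_t$: the set of $x\in\mathcal{L}_t$ with $x(\omega)$ in the convex cone generated by $e^1,\ldots,e^d$ and $\pi^{jk}_t(\omega)e^j-e^k$ for every $\omega$. Deferred solvency cone $\mathcal{Q}_t$: the set of $z\in\mathcal{L}_t$ for which there exist $y_{t+1},\ldots,y_{T+1}$, $y_s\in\mathcal{L}_{s-1}$, $y_{T+1}=0$, with $z-y_{t+1}\in\mathcal{K}_t$ and $y_s-y_{s+1}\in\mathcal{K}_s$ for $s=t+1,\ldots,T$. A trading strategy is $y=(y_t)_{t=0}^{T+1}$ with $y_0\in\mathbb{R}^d$, $y_t\in\mathcal{L}_{t-1}$ for $t=1,\ldots,T$, $y_{T+1}=0$; $\Phi$ is the set of trading strategies. A mixed stopping time is an adapted $[0,1]$-valued process $\chi=(\chi_t)_{t=0}^T$ with $\sum_{t=0}^T\chi_t=1$;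 $\mathcal{X}$ is the set of them. $\mathcal{T}$ is the set of stopping times with values in $\{0,\ldots,T\}$. An American option is an adapted $\mathbb{R}^d$-valued process $\xi=(\xi_t)_{t=0}^T$. $\Phi^{\mathrm{ag}}(\xi)$ is the set of maps $Y:\mathcal{X}\to\Phi$, $\chi\mapsto Y^\chi$, such that (i) $Y^\chi_t-\chi_t\xi_t-Y^\chi_{t+1}\in\mathcal{K}_t$ for all $\chi\in\mathcal{X}$ and $t=0,\ldots,T$; (ii) for all $\chi,\chi'\in\mathcal{X}$, $t$ and $\omega$: if $\chi_s(\omega)=\chi'_s(\omega)$ for $s=0,\ldots,t-1$ then $Y^\chi_t(\omega)=Y^{\chi'}_t(\omega)$. In particular $Y^\chi_0$ does not depend on $\chi$; it is denoted $Y_0$. $\Phi^{\mathrm{ad}}(\xi)$ is the set of $y\in\Phi$ such that for all $\tau\in\mathcal{T}$: $y_t-y_{t+1}\in\mathcal{Q}_t$ for $t=0,\ldots,\tau-1$ and $y_\tau-\xi_\tau\in\mathcal{Q}_\tau$. Standing assumption: the model admits no arbitrage (no $y\in\Phi$ with $y_0=0$, $y_t-y_{t+1}\in\mathcal{K}_t$ for $t<T$, and $y_T-x\in\mathcal{K}_T$ for some nonzero componentwise non-negative $x\in\mathcal{L}_T$). *)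

(* Defs.v *)
From HB Require Import structures.
From mathcomp Require Import all_boot all_order all_algebra.
From mathcomp Require Import reals.
Set Implicit Arguments.
Unset Strict Implicit.
Unset Printing Implicit Defensive.
Import Order.TTheory GRing.Theory Num.Theory.
Local Open Scope ring_scope.

Section Model.
Variables (R : realType) (Omega : finType) (d : nat).

Definition unitv (j : 'I_d) : 'rV[R]_d := delta_mx 0 j.

(* A finite algebra (= sigma-algebra, Omega finite) of events. *)
Definition is_algebra (A : {set {set Omega}}) : Prop :=
  [/\ setT \in A,
      (forall B, B \in A -> ~: B \in A) &
      (forall B C, B \in A -> C \in A -> B :|: C \in A)].

Definition filtration (T : nat) (F : nat -> {set {set Omega}}) : Prop :=
  [/\ (forall t, (t <= T)%N -> is_algebra (F t)),
      (forall s t, (s <= t)%N -> (t <= T)%N -> F s \subset F t),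
      F 0%N = [set set0; setT] &
      F T = powerset setT].

Definition full_support_prob (P : Omega -> R) : Prop :=
  (forall w, 0 < P w) /\ \sum_(w : Omega) P w = 1.

Definition meas (G : {set {set Omega}}) (X : Omega -> 'rV[R]_d) : Prop :=
  forall v : 'rV[R]_d, [set w | X w == v] \in G.
Definition meas_sc (G : {set {set Omega}}) (c : Omega -> R) : Prop :=
  forall r : R, [set w | c w == r] \in G.

Definition adapted (T : nat) (F : nat -> {set {set Omega}})
  (xi : nat -> Omega -> 'rV[R]_d) : Prop :=
  forall t, (t <= T)%N -> meas (F t) (xi t).

Definition exchange_rates (T : nat) (F : nat -> {set {set Omega}})
  (pi : nat -> Omega -> 'I_d -> 'I_d -> R) : Prop :=
  forall t, (t <= T)%N ->
    [/\ (forall w j k, 0 < pi t w j k),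
        (forall w j, pi t w j j = 1) &
        (forall j k, meas_sc (F t) (fun w => pi t w j k))].

Definition in_solv_cone (p : 'I_d -> 'I_d -> R) (x : 'rV[R]_d) : Prop :=
  exists (a : 'I_d -> R) (b : 'I_d -> 'I_d -> R),
    [/\ (forall j, 0 <= a j), (forall j k, 0 <= b j k) &
        x = \sum_(j < d) a j *: unitv j
            + \sum_(j < d) \sum_(k < d) b j k *: (p j k *: unitv j - unitv k)].

Variables (T : nat) (F : nat -> {set {set Omega}})
          (pi : nat -> Omega -> 'I_d -> 'I_d -> R).

Definition Kset (t : nat) (x : Omega -> 'rV[R]_d) : Prop :=
  meas (F t) x /\ forall w, in_solv_cone (pi t w) (x w).

Definition Qset (t : nat) (z : Omega -> 'rV[R]_d) : Prop :=
  meas (F t) z /\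
  exists y : nat -> Omega -> 'rV[R]_d,
    [/\ (forall s, (t < s)%N -> (s <= T.+1)%N -> meas (F s.-1) (y s)),
        (forall w, y T.+1 w = 0),
        Kset t (fun w => z w - y t.+1 w) &
        (forall s, (t < s)%N -> (s <= T)%N -> Kset s (fun w => y s w - y s.+1 w))].

Definition strategy (y : nat -> Omega -> 'rV[R]_d) : Prop :=
  [/\ (forall w w', y 0%N w = y 0%N w'),
      (forall t, (1 <= t)%N -> (t <= T)%N -> meas (F t.-1) (y t)) &
      (forall t w, (T < t)%N -> y t w = 0)].

Definition mixed_stop (chi : nat -> Omega -> R) : Prop :=
  [/\ (forall t, (t <= T)%N -> meas_sc (F t) (chi t)),
      (forall t w, (t <= T)%N -> 0 <= chi t w <= 1),
      (forall w, \sum_(t < T.+1) chi t w = 1) &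
      (forall t w, (T < t)%N -> chi t w = 0)].

Definition stopping_time (tau : Omega -> nat) : Prop :=
  (forall w, (tau w <= T)%N) /\
  (forall t, (t <= T)%N -> [set w | tau w == t] \in F t).

Definition no_arbitrage : Prop :=
  ~ exists y : nat -> Omega -> 'rV[R]_d,
      [/\ strategy y,
          (forall w, y 0%N w = 0),
          (forall t, (t < T)%N -> Kset t (fun w => y t w - y t.+1 w)) &
          exists x : Omega -> 'rV[R]_d,
            [/\ meas (F T) x,
                (forall w j, 0 <= x w 0 j),
                (exists w, x w != 0) &
                Kset T (fun w => y T w - x w)]].

Variable xi : nat -> Omega -> 'rV[R]_d.

(* Phi^ag(xi): maps chi |-> Y^chi (only their values on mixed stopping
   times matter). *)
Definition Phi_ag (Y : (nat -> Omega -> R) -> nat -> Omega -> 'rV[R]_d) : Prop :=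
  [/\ (forall chi, mixed_stop chi -> strategy (Y chi)),
      (forall chi, mixed_stop chi -> forall t, (t <= T)%N ->
          Kset t (fun w => Y chi t w - chi t w *: xi t w - Y chi t.+1 w)) &
      (forall chi chi', mixed_stop chi -> mixed_stop chi' ->
          forall t w, (t <= T.+1)%N ->
            (forall s, (s < t)%N -> chi s w = chi' s w) ->
            Y chi t w = Y chi' t w)].

(* Phi^ad(xi): the conditions "y_t - y_{t+1} in Q_t for t < tau" and
   "y_tau - xi_tau in Q_tau" are read on the F_t-measurable events
   {t < tau} and {tau = t} respectively, i.e. via indicator multiplication. *)
Definition Phi_ad (y : nat -> Omega -> 'rV[R]_d) : Prop :=
  strategy y /\
  forall tau, stopping_time tau -> forall t, (t <= T)%N ->
    Qset t (fun w => if (t < tau w)%N then y t w - y t.+1 w else 0) /\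
    Qset t (fun w => if tau w == t then y t w - xi t w else 0).

End Model.

(* Main.v *)
Require Import Defs.
From HB Require Import structures.
From mathcomp Require Import all_boot all_order all_algebra.
From mathcomp Require Import reals.
From mathcomp Require Import boolp zify ring.
Import Order.TTheory GRing.Theory Num.Theory.
Local Open Scope ring_scope.
Set Implicit Arguments.
Unset Strict Implicit.


Definition gmeas (Omega : finType) (A : eqType) (G : {set {set Omega}})
  (X : Omega -> A) := forall a, [set w | X w == a] \in G.

Lemma alg_T (Omega : finType) (G : {set {set Omega}}) : is_algebra G -> setT \in G.
Proof. by case. Qed.
Lemma alg_C (Omega : finType) (G : {set {set Omega}}) B : is_algebra G -> B \in G -> ~: B \in G.
Proof. by case=> _ h _; apply: h. Qed.
Lemma alg_U (Omega : finType) (G : {set {set Omega}}) B C : is_algebra G -> B \in G -> C \in G -> B :|: C \in G.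
Proof. by case=> _ _ h; apply: h. Qed.
Lemma alg_0 (Omega : finType) (G : {set {set Omega}}) : is_algebra G -> set0 \in G.
Proof. by move=> hG; rewrite -setCT; apply: alg_C => //; apply: alg_T. Qed.
Lemma alg_I (Omega : finType) (G : {set {set Omega}}) B C : is_algebra G -> B \in G -> C \in G -> B :&: C \in G.
Proof.
move=> hG hB hC; rewrite -[B :&: C]setCK setCI.
by apply: alg_C => //; apply: alg_U => //; apply: alg_C.
Qed.
Lemma alg_const (Omega : finType) (G : {set {set Omega}}) (b : bool) : is_algebra G -> [set _ : Omega | b] \in G.
Proof.
move=> hG; case: b.
  have -> : [set _ : Omega | true] = setT by apply/setP=> w; rewrite !inE.
  exact: alg_T.
have -> : [set _ : Omega | false] = set0 by apply/setP=> w; rewrite !inE.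
exact: alg_0.
Qed.

Lemma gmeas_const (Omega : finType) (A : eqType) (G : {set {set Omega}}) (c : A) :
  is_algebra G -> gmeas G (fun _ => c).
Proof. by move=> hG a; apply: alg_const. Qed.

Lemma gmeas_ext (Omega : finType) (A : eqType) (G : {set {set Omega}}) (X Y : Omega -> A) :
  (forall w, X w = Y w) -> gmeas G X -> gmeas G Y.
Proof.
move=> e h a; have -> : [set w | Y w == a] = [set w | X w == a].
  by apply/setP=> w; rewrite !inE e.
exact: h.
Qed.

Lemma gmeas_mono (Omega : finType) (A : eqType) (G G' : {set {set Omega}}) (X : Omega -> A) :
  G \subset G' -> gmeas G X -> gmeas G' X.
Proof. by move=> /subsetP s h a; apply: s. Qed.

Lemma gmeas2 (Omega : finType) (A B C : eqType) (G : {set {set Omega}})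
  (X : Omega -> A) (Y : Omega -> B) (f : A -> B -> C) :
  is_algebra G -> gmeas G X -> gmeas G Y -> gmeas G (fun w => f (X w) (Y w)).
Proof.
move=> hG hX hY c.
have -> : [set w | f (X w) (Y w) == c] =
  \bigcup_(w' | f (X w') (Y w') == c) ([set w | X w == X w'] :&: [set w | Y w == Y w']).
  apply/setP=> w; rewrite inE; apply/idP/bigcupP.
    by move=> h; exists w => //; rewrite !inE !eqxx.
  by case=> w' h; rewrite !inE => /andP[/eqP -> /eqP ->].
apply: (big_ind (fun S => S \in G)); first exact: alg_0.
  by move=> ? ? ? ?; apply: alg_U.
by move=> w' _; apply: alg_I.
Qed.

Lemma gmeas1 (Omega : finType) (A C : eqType) (G : {set {set Omega}})
  (X : Omega -> A) (f : A -> C) :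
  is_algebra G -> gmeas G X -> gmeas G (fun w => f (X w)).
Proof. by move=> hG hX; apply: (gmeas2 (fun a (_ : A) => f a)). Qed.

Lemma gmeas_bool (Omega : finType) (G : {set {set Omega}}) (b : Omega -> bool) :
  is_algebra G -> [set w | b w] \in G -> gmeas G b.
Proof.
move=> hG h [].
  have -> : [set w | b w == true] = [set w | b w] by apply/setP=> w; rewrite !inE eqb_id.
  done.
have -> : [set w | b w == false] = ~: [set w | b w] by apply/setP=> w; rewrite !inE eqbF_neg.
exact: alg_C.
Qed.

Lemma gmeas_sum (Omega : finType) (V : zmodType) (G : {set {set Omega}}) n
  (g : nat -> Omega -> V) :
  is_algebra G -> (forall r, (r < n)%N -> gmeas G (g r)) ->
  gmeas G (fun w => \sum_(r < n) g r w).
Proof.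
move=> hG; elim: n => [|n IH] h.
  by apply: (gmeas_ext (X := fun _ => 0)) => [w|]; [rewrite big_ord0 | apply: gmeas_const].
apply: (gmeas_ext (X := fun w => \sum_(r < n) g r w + g n w)).
  by move=> w; rewrite big_ord_recr.
apply: (gmeas2 (fun a b => a + b)) => //.
  by apply: IH => r hr; apply: h; apply: ltnW.
exact: h.
Qed.



Lemma cone0 (R : realType) d (p : 'I_d -> 'I_d -> R) : in_solv_cone p 0.
Proof.
exists (fun _ => 0), (fun _ _ => 0); split => //.
by rewrite !big1 ?addr0 // => j _; rewrite ?big1 // => *; rewrite scale0r.
Qed.

Lemma coneD (R : realType) d (p : 'I_d -> 'I_d -> R) x y :
  in_solv_cone p x -> in_solv_cone p y -> in_solv_cone p (x + y).
Proof.
case=> a [b [ha hb ->]] [a' [b' [ha' hb' ->]]].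
exists (fun j => a j + a' j), (fun j k => b j k + b' j k); split.
- by move=> j; rewrite addr_ge0.
- by move=> j k; rewrite addr_ge0.
rewrite addrACA; congr (_ + _).
  by rewrite -big_split; apply: eq_bigr => j _; rewrite scalerDl.
rewrite -big_split; apply: eq_bigr => j _; rewrite -big_split.
by apply: eq_bigr => k _; rewrite scalerDl.
Qed.

Lemma coneZ (R : realType) d (p : 'I_d -> 'I_d -> R) c x :
  0 <= c -> in_solv_cone p x -> in_solv_cone p (c *: x).
Proof.
move=> hc [a [b [ha hb ->]]].
exists (fun j => c * a j), (fun j k => c * b j k); split.
- by move=> j; rewrite mulr_ge0.
- by move=> j k; rewrite mulr_ge0.
rewrite scalerDr !scaler_sumr; congr (_ + _).
  by apply: eq_bigr => j _; rewrite scalerA.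
by apply: eq_bigr => j _; rewrite scaler_sumr; apply: eq_bigr => k _; rewrite scalerA.
Qed.

Lemma cone_sum (R : realType) d (p : 'I_d -> 'I_d -> R) n (g : 'I_n -> 'rV[R]_d) :
  (forall r, in_solv_cone p (g r)) -> in_solv_cone p (\sum_(r < n) g r).
Proof.
move=> h; apply: (big_ind (in_solv_cone p)) => //; first exact: cone0.
exact: coneD.
Qed.

Lemma filt_alg (Omega : finType) T (F : nat -> {set {set Omega}}) t :
  filtration T F -> (t <= T)%N -> is_algebra (F t).
Proof. by case=> h _ _ _; apply: h. Qed.

Lemma filt_mono (Omega : finType) T (F : nat -> {set {set Omega}}) s t :
  filtration T F -> (s <= t)%N -> (t <= T)%N -> F s \subset F t.
Proof. by case=> _ h _ _; apply: h. Qed.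

Lemma gmeas_up (Omega : finType) (A : eqType) T (F : nat -> {set {set Omega}}) s t (X : Omega -> A) :
  filtration T F -> (s <= t)%N -> (t <= T)%N -> gmeas (F s) X -> gmeas (F t) X.
Proof. by move=> hF st tT; apply: gmeas_mono; apply: filt_mono hF st tT. Qed.

Lemma strat_meas (R : realType) (Omega : finType) d T (F : nat -> {set {set Omega}})
  (y : nat -> Omega -> 'rV[R]_d) s t :
  filtration T F -> strategy T F y -> (s <= t.+1)%N -> (t <= T)%N -> gmeas (F t) (y s).
Proof.
move=> hF [h0 hm hz] st tT.
case: s st => [|s] st.
  move=> a; have -> : [set w | y 0%N w == a] = [set _ | [exists w', y 0%N w' == a]].
    apply/setP=> w; rewrite !inE; apply/idP/existsP; first by exists w.
    by case=> w'; rewrite (h0 w w').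
  by apply: alg_const; apply: filt_alg hF tT.
case: (ltnP s T) => hs.
  apply: (gmeas_up (T:=T) (s := s) hF) => //.
  exact: (hm s.+1).
apply: (gmeas_ext (X := fun _ => 0)) => [w|]; first by rewrite hz // ltnS.
by apply: gmeas_const; apply: filt_alg hF tT.
Qed.



Definition chitau (R : realType) (Omega : finType) (tau : Omega -> nat) : nat -> Omega -> R :=
  fun s w => if tau w == s then 1 else 0.

Lemma stop_const (Omega : finType) T (F : nat -> {set {set Omega}}) r :
  filtration T F -> (r <= T)%N -> stopping_time T F (fun _ => r).
Proof. by move=> hF rT; split=> // t tT; apply: alg_const; apply: filt_alg hF tT. Qed.

Lemma stop_mixed (R : realType) (Omega : finType) T (F : nat -> {set {set Omega}}) tau :
  filtration T F -> stopping_time T F tau -> mixed_stop T F (chitau R tau).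
Proof.
move=> hF [hle hev]; split.
- move=> t tT; apply: (gmeas1 (fun b : bool => if b then 1 else 0 : R)).
    exact: filt_alg hF tT.
  by apply: gmeas_bool; [apply: filt_alg hF tT | apply: hev].
- by move=> t w _; rewrite /chitau; case: ifP => _; rewrite ?lexx ?ler01.
- move=> w; rewrite (bigD1 (Ordinal (leq_ltn_trans (hle w) (ltnSn T)))) //=.
  rewrite /chitau eqxx big1 ?addr0 // => i hi; case: ifP => // /eqP e.
  by move: hi; rewrite -val_eqE /= e eqxx.
- move=> t w tT; rewrite /chitau; case: ifP => // /eqP e.
  by move: (hle w); rewrite e leqNgt tT.
Qed.

Lemma stop_lt (Omega : finType) T (F : nat -> {set {set Omega}}) tau t :
  filtration T F -> stopping_time T F tau -> (t <= T)%N ->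
  gmeas (F t) (fun w => (t < tau w)%N).
Proof.
move=> hF [hle hev] tT; apply: gmeas_bool; first exact: filt_alg hF tT.
have -> : [set w | (t < tau w)%N] = ~: \bigcup_(s < t.+1) [set w | tau w == s].
  apply/setP=> w; rewrite !inE; apply/idP/idP => h.
    apply/bigcupP => -[s _]; rewrite inE => /eqP e.
    by move: h; rewrite e ltnNge -ltnS ltn_ord.
  rewrite ltnNge; apply/negP => hw; move/bigcupP: h; apply.
  by exists (Ordinal (hw : (tau w < t.+1)%N)) => //; rewrite inE.
apply: alg_C; first exact: filt_alg hF tT.
apply: (big_ind (fun S => S \in F t)); first exact: (alg_0 (filt_alg hF tT)).
  by move=> ? ? ? ?; apply: alg_U => //; apply: filt_alg hF tT.
move=> s _; have hsT : (s <= T)%N by apply: leq_trans tT; rewrite -ltnS.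
have := hev s hsT; apply/subsetP; apply: filt_mono hF _ tT.
by rewrite -ltnS.
Qed.

Lemma Q_of_K (R : realType) (Omega : finType) d T (F : nat -> {set {set Omega}})
  (pi : nat -> Omega -> 'I_d -> 'I_d -> R) t z :
  filtration T F -> (t <= T)%N -> Kset F pi t z -> Qset T F pi t z.
Proof.
move=> hF tT [hm hc]; split => //; exists (fun _ _ => 0); split => //.
- move=> s ts sT; apply: gmeas_const; apply: (filt_alg (t := s.-1) hF).
  by rewrite -ltnS (ltn_predK ts).
- split; last by move=> w; rewrite subr0.
  by apply: (gmeas_ext (X := z)) => // w; rewrite subr0.
- move=> s ts sT; split; last by move=> w; rewrite subr0; apply: cone0.
  by apply: gmeas_const; apply: filt_alg hF sT.
Qed.



Lemma ag_to_ad (R : realType) (Omega : finType) (d T : nat)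
  (F : nat -> {set {set Omega}}) (pi : nat -> Omega -> 'I_d -> 'I_d -> R)
  (xi : nat -> Omega -> 'rV[R]_d) (hF : filtration T F) (hxi : adapted T F xi)
  (x : 'rV[R]_d) :
  (exists Y, Phi_ag T F pi xi Y /\
       forall chi, mixed_stop T F chi -> forall w, Y chi 0%N w = x) ->
  exists y, Phi_ad T F pi xi y /\ forall w, y 0%N w = x.
Proof.
case=> Y [[hS hK hN] hY0].
have mT : mixed_stop T F (chitau R (fun _ : Omega => T)).
  by apply: stop_mixed => //; apply: stop_const.
set chiT := chitau R (fun _ : Omega => T) in mT *.
exists (Y chiT); split; last exact: hY0.
have sT := hS _ mT.
split => // tau htau t tT.
have mtau := stop_mixed R hF htau; set ch := chitau R tau in mtau *.
have sch := hS _ mtau.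
have hFt := filt_alg hF tT.
have [_ hc] := hK ch mtau t tT.
have eqY : forall k w, (k <= t.+1)%N -> (forall s, (s < k)%N -> tau w != s /\ T != s) ->
    Y ch k w = Y chiT k w.
  move=> k w kt h; apply: hN => //; first by apply: leq_trans kt _.
  by move=> s /h [h1 h2]; rewrite /ch /chiT /chitau (negbTE h1) (negbTE h2).
have [hle hev] := htau.
split.
- apply: Q_of_K => //; split.
    apply: (gmeas2 (fun (b : bool) v => if b then v else 0)) => //.
      exact: (stop_lt hF htau tT).
    apply: (gmeas2 (fun a b : 'rV[R]_d => a - b)) => //; apply: (strat_meas hF sT) => //.
  move=> w; case: ifP => h; last exact: cone0.
  have h' : forall s, (s < t.+1)%N -> tau w != s /\ T != s.
    move=> s st; have := hle w; split; apply/eqP => e; lia.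
  rewrite -(eqY t w) ?leqnSn // => [|s st]; last by apply: h'; apply: ltnW.
  rewrite -(eqY t.+1 w) //.
  have := hc w; rewrite /ch /chitau.
  have -> : (tau w == t) = false by apply/negbTE; apply/eqP => e; move: h; rewrite e ltnn.
  by rewrite scale0r subr0.
have hb : gmeas (F t) (fun w => tau w == t) by apply: gmeas_bool => //; apply: hev.
have hbs : forall s, (t <= s)%N -> (s <= T)%N -> gmeas (F s) (fun w => tau w == t).
  by move=> s ts sTT; apply: (gmeas_up (T:=T) (s:=t) hF).
split.
  apply: (gmeas2 (fun (b : bool) v => if b then v else 0)) => //.
  apply: (gmeas2 (fun a b : 'rV[R]_d => a - b)) => //; last exact: hxi.
  exact: (strat_meas hF sT).
exists (fun s w => if tau w == t then Y ch s w else 0); split.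
- move=> s ts sTT; have hs1 : (s.-1 <= T)%N by lia.
  apply: (gmeas2 (fun (b : bool) v => if b then v else 0)).
  + exact: filt_alg hF hs1.
  + by apply: hbs => //; lia.
  + by apply: (strat_meas hF sch) => //; lia.
- move=> w; case: ifP => // _; have [_ _ hz] := sch; exact: hz.
- split.
    apply: (gmeas2 (fun a b : 'rV[R]_d => a - b)) => //.
      apply: (gmeas2 (fun (b : bool) v => if b then v else 0)) => //.
      apply: (gmeas2 (fun a b : 'rV[R]_d => a - b)) => //; last exact: hxi.
      exact: (strat_meas hF sT).
    apply: (gmeas2 (fun (b : bool) v => if b then v else 0)) => //.
    exact: (strat_meas hF sch).
  move=> w; case: ifP => e; last by rewrite subr0; apply: cone0.
  rewrite -(eqY t w) ?leqnSn //; last first.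
    by move=> s st; move/eqP: e => e; split; apply/eqP; lia.
  by have := hc w; rewrite /ch /chitau e scale1r.
- move=> s ts sTT; have [_ hcs] := hK ch mtau s sTT; split.
    apply: (gmeas2 (fun a b : 'rV[R]_d => a - b)) => //.
    + exact: filt_alg hF sTT.
    + apply: (gmeas2 (fun (b : bool) v => if b then v else 0)).
      * exact: filt_alg hF sTT.
      * by apply: hbs => //; lia.
      * by apply: (strat_meas hF sch) => //; lia.
    + apply: (gmeas2 (fun (b : bool) v => if b then v else 0)).
      * exact: filt_alg hF sTT.
      * by apply: hbs => //; lia.
      * exact: (strat_meas hF sch).
  move=> w; case: ifP => e; last by rewrite subr0; apply: cone0.
  have := hcs w; rewrite /ch /chitau.
  have -> : (tau w == s) = false by move/eqP: e => e; apply/eqP; lia.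
  by rewrite scale0r subr0.
Qed.



Definition cc (R : realType) (Omega : finType) (chi : nat -> Omega -> R) t w : R :=
  1 - \sum_(s < t) chi s w.

Definition frm (R : realType) (Omega : finType) d (y : nat -> Omega -> 'rV[R]_d)
  (U V : nat -> nat -> Omega -> 'rV[R]_d) (chi : nat -> Omega -> R) t w : 'rV[R]_d :=
  cc chi t w *: y t w + \sum_(r < t) (chi r w *: U r t w + cc chi r.+1 w *: V r t w).

Lemma chi_ge0 (R : realType) (Omega : finType) T (F : nat -> {set {set Omega}}) chi :
  mixed_stop T F chi -> forall s w, 0 <= chi s w :> R.
Proof.
case=> _ h01 _ hz s w; case: (leqP s T) => sT.
  by have /andP[] := h01 s w sT.
by rewrite hz.
Qed.

Lemma cc_ge0 (R : realType) (Omega : finType) T (F : nat -> {set {set Omega}}) chi :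
  mixed_stop T F chi -> forall k w, 0 <= cc chi k w :> R.
Proof.
move=> mc k w; have hge := chi_ge0 mc.
case: mc => _ _ h1 hz; rewrite /cc subr_ge0 -(h1 w).
rewrite -!(big_mkord xpredT (fun s => chi s w)).
apply: (le_trans (y := \sum_(0 <= s < k + T.+1) chi s w)).
  rewrite [leRHS](big_cat_nat _ (n := k)) ?leq_addr //= lerDl.
  by apply: sumr_ge0 => s _.
rewrite [leLHS](big_cat_nat _ (n := T.+1)) ?leq_addl //=.
have -> : \sum_(T.+1 <= s < k + T.+1) chi s w = 0.
  by rewrite big_nat_cond big1 // => s /andP[/andP[hs _] _]; apply: hz.
by rewrite addr0.
Qed.

Lemma cc_end (R : realType) (Omega : finType) T (F : nat -> {set {set Omega}}) chi w :
  mixed_stop T F chi -> cc chi T.+1 w = 0 :> R.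
Proof. by case=> _ _ h1 _; rewrite /cc h1 subrr. Qed.

Lemma cc_S (R : realType) (Omega : finType) (chi : nat -> Omega -> R) t w :
  cc chi t w = cc chi t.+1 w + chi t w.
Proof. by rewrite /cc big_ord_recr /=; ring. Qed.

Lemma ident1 (R : realType) d (ct c1 a : R) (Y0 Y1 X Ut Vt S1 S2 : 'rV[R]_d) :
  ct = c1 + a ->
  ct *: Y0 + S1 - a *: X - (c1 *: Y1 + (S2 + (a *: Ut + c1 *: Vt))) =
  a *: (Y0 - X - Ut) + c1 *: (Y0 - Y1 - Vt) + (S1 - S2).
Proof. by move=> ->; apply/rowP => j; rewrite !mxE; ring. Qed.

Lemma ident2 (R : realType) d (a c : R) (A B C D : 'rV[R]_d) :
  (a *: A + c *: C) - (a *: B + c *: D) = a *: (A - B) + c *: (C - D).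
Proof. by apply/rowP => j; rewrite !mxE; ring. Qed.

Lemma cc_meas (R : realType) (Omega : finType) T (F : nat -> {set {set Omega}}) chi j k :
  filtration T F -> mixed_stop T F chi -> (j <= k.+1)%N -> (k <= T)%N ->
  gmeas (F k) (cc (R:=R) chi j).
Proof.
move=> hF mc jk kT; have hFk := filt_alg hF kT.
apply: (gmeas2 (fun a b : R => a - b)) => //; first exact: gmeas_const.
apply: gmeas_sum => // s sj.
have [hm _ _ _] := mc.
by apply: (gmeas_up (T:=T) (s:=s) hF) => //; [lia | apply: hm; lia].
Qed.



Definition QD (R : realType) (Omega : finType) d T (F : nat -> {set {set Omega}})
  (pi : nat -> Omega -> 'I_d -> 'I_d -> R) t (z : Omega -> 'rV[R]_d)
  (u : nat -> Omega -> 'rV[R]_d) : Prop :=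
  [/\ (forall s, (t < s)%N -> (s <= T.+1)%N -> meas (F s.-1) (u s)),
      (forall w, u T.+1 w = 0),
      Kset F pi t (fun w => z w - u t.+1 w) &
      (forall s, (t < s)%N -> (s <= T)%N -> Kset F pi s (fun w => u s w - u s.+1 w))].

Lemma form_meas (R : realType) (Omega : finType) d T (F : nat -> {set {set Omega}})
  (pi : nat -> Omega -> 'I_d -> 'I_d -> R) (y : nat -> Omega -> 'rV[R]_d)
  (xi : nat -> Omega -> 'rV[R]_d) (U V : nat -> nat -> Omega -> 'rV[R]_d) chi k t :
  filtration T F -> strategy T F y -> mixed_stop T F chi ->
  (forall r, (r <= T)%N -> QD T F pi r (fun w => y r w - xi r w) (U r)) ->
  (forall r, (r < T)%N -> QD T F pi r (fun w => y r w - y r.+1 w) (V r)) ->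
  (t <= k.+1)%N -> (k <= T)%N ->
  gmeas (F k) (frm y U (fun r => if (r < T)%N then V r else fun _ _ => 0) chi t).
Proof.
move=> hF hy mc hU hV tk kT; have hFk := filt_alg hF kT.
apply: (gmeas2 (fun a b : 'rV[R]_d => a + b)) => //.
  apply: (gmeas2 (fun (a : R) (b : 'rV[R]_d) => a *: b)) => //.
    exact: (cc_meas hF mc tk kT).
  exact: (strat_meas hF hy tk kT).
apply: (@gmeas_sum _ _ (F k) t (fun r w => chi r w *: U r t w + cc chi r.+1 w *:
   (if (r < T)%N then V r else fun _ _ => 0) t w)) => // r rt.
apply: (gmeas2 (fun a b : 'rV[R]_d => a + b)) => //.
  apply: (gmeas2 (fun (a : R) (b : 'rV[R]_d) => a *: b)) => //.
    have [hm _ _ _] := mc.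
    by apply: (gmeas_up (T:=T) (s:=r) hF) => //; [lia | apply: hm; lia].
  have [hm _ _ _] := hU r ltac:(lia).
  by apply: (gmeas_up (T:=T) (s:=t.-1) hF) => //; [lia | apply: hm; lia].
apply: (gmeas2 (fun (a : R) (b : 'rV[R]_d) => a *: b)) => //.
  by apply: (cc_meas hF mc _ kT); lia.
case: ifP => rT; last exact: gmeas_const.
have [hm _ _ _] := hV r rT.
by apply: (gmeas_up (T:=T) (s:=t.-1) hF) => //; [lia | apply: hm; lia].
Qed.

Lemma ad_to_ag (R : realType) (Omega : finType) (d T : nat)
  (F : nat -> {set {set Omega}}) (pi : nat -> Omega -> 'I_d -> 'I_d -> R)
  (xi : nat -> Omega -> 'rV[R]_d) (hF : filtration T F) (hxi : adapted T F xi)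
  (x : 'rV[R]_d) :
  (exists y, Phi_ad T F pi xi y /\ forall w, y 0%N w = x) ->
  exists Y, Phi_ag T F pi xi Y /\
       forall chi, mixed_stop T F chi -> forall w, Y chi 0%N w = x.
Proof.
case=> y [[hys hQ] hy0].
have hU : forall r, exists u, (r <= T)%N -> QD T F pi r (fun w => y r w - xi r w) u.
  move=> r; case: (leqP r T) => rT; last by exists (fun _ _ => 0).
  have [_ [_ [u hu]]] := hQ _ (stop_const hF rT) r rT.
  by exists u => _; rewrite eqxx in hu.
have hV : forall r, exists v, (r < T)%N -> QD T F pi r (fun w => y r w - y r.+1 w) v.
  move=> r; case: (ltnP r T) => rT; last by exists (fun _ _ => 0).
  have [[_ [v hv]] _] := hQ _ (stop_const hF (leqnn T)) r (ltnW rT).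
  by exists v => _; rewrite rT in hv.
have [U hU'] := boolp.choice hU.
have [V hV'] := boolp.choice hV.
set V' := fun r => if (r < T)%N then V r else fun _ _ => 0.
exists (fun chi t w => if (t <= T)%N then frm y U V' chi t w else 0).
have frm0 : forall chi w, frm y U V' chi 0 w = y 0%N w.
  by move=> chi w; rewrite /frm /cc !big_ord0 subr0 scale1r addr0.
split; last by move=> chi _ w; rewrite leq0n frm0.
have hU2 : forall r, (r <= T)%N -> QD T F pi r (fun w => y r w - xi r w) (U r).
  by move=> r hr; apply: hU'.
have hV2 : forall r, (r < T)%N -> QD T F pi r (fun w => y r w - y r.+1 w) (V r).
  by move=> r hr; apply: hV'.
split.
- move=> chi mc; split.
  + by move=> w w'; rewrite leq0n !frm0; case: hys => h0 _ _; apply: h0.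
  + move=> t t1 tT.
    apply: (gmeas_ext (X := frm y U V' chi t)) => [w|]; first by rewrite tT.
    by apply: (form_meas hF hys mc hU2 hV2); lia.
  + by move=> t w tT; rewrite leqNgt tT.
- move=> chi mc t tT.
  have eY1 : forall w, (if (t.+1 <= T)%N then frm y U V' chi t.+1 w else 0)
                        = frm y U V' chi t.+1 w.
    move=> w; case: ifP => // h.
    have eT : t = T by lia.
    rewrite eT /frm; case: hys => _ _ hz; rewrite hz // scaler0 add0r.
    rewrite big1 // => r _.
    have [_ h2 _ _] := hU2 r (ltn_ord r); rewrite h2 scaler0 add0r /V'.
    case: ifP => hr; last by rewrite scaler0.
    by have [_ h3 _ _] := hV2 r hr; rewrite h3 scaler0.
  split.
    apply: (gmeas_ext (X := fun w => frm y U V' chi t w - chi t w *: xi t w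
                                  - frm y U V' chi t.+1 w)).
      by move=> w; rewrite tT eY1.
    have hFt := filt_alg hF tT.
    apply: (gmeas2 (fun a b : 'rV[R]_d => a - b)) => //.
      apply: (gmeas2 (fun a b : 'rV[R]_d => a - b)) => //.
        by apply: (form_meas hF hys mc hU2 hV2) => //; lia.
      apply: (gmeas2 (fun (a : R) (b : 'rV[R]_d) => a *: b)) => //; last exact: hxi.
      by have [hm _ _ _] := mc; apply: hm.
    by apply: (form_meas hF hys mc hU2 hV2) => //; lia.
  move=> w; rewrite tT eY1 /frm big_ord_recr /=.
  rewrite (ident1 (c1 := cc chi t.+1 w) (a := chi t w)); last exact: cc_S.
  apply: coneD; first apply: coneD.
  + apply: coneZ; first exact: (chi_ge0 mc).
    by have [_ _ [_ hk] _] := hU2 t tT; apply: hk.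
  + case: (ltnP t T) => htT.
      apply: coneZ; first exact: (cc_ge0 mc).
      by rewrite /V' htT; have [_ _ [_ hk] _] := hV2 t htT; apply: hk.
    have eT : t = T by lia.
    by rewrite eT (cc_end _ mc) scale0r; apply: cone0.
  + rewrite -sumrB; apply: cone_sum => r; rewrite ident2.
    have rT : (r < T)%N by have := ltn_ord r; lia.
    apply: coneD; apply: coneZ.
    * exact: (chi_ge0 mc).
    * have [_ _ _ h4] := hU2 r (ltnW rT).
      by have [_ hk] := h4 t (ltn_ord r) tT; apply: hk.
    * exact: (cc_ge0 mc).
    * rewrite /V' rT; have [_ _ _ h4] := hV2 r rT.
      by have [_ hk] := h4 t (ltn_ord r) tT; apply: hk.
- move=> chi chi' mc mc' t w tT h; case: ifP => // htT; rewrite /frm.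
  have hc : forall j, (j <= t)%N -> cc chi j w = cc chi' j w.
    move=> j jt; rewrite /cc; congr (1 - _); apply: eq_bigr => s _; apply: h.
    by have := ltn_ord s; lia.
  rewrite hc //; congr (_ + _); apply: eq_bigr => r _.
  by rewrite h ?ltn_ord // hc.
Qed.


Unset Implicit Arguments.
Set Strict Implicit.

Theorem proposition4p4 (R : realType) (Omega : finType) (d T : nat)
  (F : nat -> {set {set Omega}}) (P : Omega -> R)
  (pi : nat -> Omega -> 'I_d -> 'I_d -> R)
  (xi : nat -> Omega -> 'rV[R]_d)
  (hF : filtration T F) (hP : full_support_prob P)
  (hpi : exchange_rates T F pi) (hNA : no_arbitrage T F pi)
  (hxi : adapted T F xi) :
  forall x : 'rV[R]_d,
    (exists Y, Phi_ag T F pi xi Y /\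
       forall chi, mixed_stop T F chi -> forall w, Y chi 0%N w = x)
    <->
    (exists y, Phi_ad T F pi xi y /\ forall w, y 0%N w = x).
Proof.
move=> x; split; [exact: ag_to_ad | exact: ad_to_ag].
Qed.
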